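(* Let $n\ge6$ be even, $m\in\mathbb N$, and assume the seeds are i.i.d. uniform on $[n]$. Then for every $k\in\{2,\dots,n/2\}$, $$\mathsf P\bigl(\Xi_{\{1,k\}}(1)\le\Xi_{\{1,k\}}(k)\bigr)\le\exp\Bigl\{m\log\Bigl[1-\tfrac1n\bigl(\sqrt{n+1-k}-\sqrt{k-1}\bigr)^2\Bigr]\Bigr\}.$$
   Context: Candidates $[n]$, $m$ voters; voter $j$ has the clockwise oriented preference list $(s_j,s_j+1,\dots,n,1,\dots,s_j-1)$ with seed $s_j$; the seeds are independent and uniform on $[n]$. In an election among a non-empty $S\subseteq[n]$ each voter votes for the first candidate of $S$ in its list; $\Xi_S(i)$ is the number of votes for $i\in S$. *)

(* Defs.v *)
From HB Require Import structures.
From mathcomp Require Import all_boot all_order all_algebra.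
From mathcomp Require Import reals.
From mathcomp Require Import sequences exp.
Set Implicit Arguments. Unset Strict Implicit. Unset Printing Implicit Defensive.
Import Order.TTheory GRing.Theory Num.Theory.

(* Candidates are the natural numbers 1..n.  A seed is an element of 'I_n;
   the seed s : 'I_n stands for the candidate s.+1 in [n]. *)

Definition pref (n s : nat) : seq nat := iota s (n.+1 - s) ++ iota 1 (s.-1).

Definition vote (n : nat) (S : seq nat) (s : 'I_n) : nat :=
  head 0 [seq c <- pref n s.+1 | c \in S].

Definition Xi (n m : nat) (S : seq nat) (seeds : {ffun 'I_m -> 'I_n}) (i : nat) : nat :=
  #|[set j : 'I_m | vote S (seeds j) == i]|.

(* Probability of an event on i.i.d. uniform seeds: uniform measure on
   the n^m seed vectors. *)
Definition Prob (R : realType) (n m : nat) (E : pred {ffun 'I_m -> 'I_n}) : R :=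
  (#|[set w | E w]|%:R / (n ^ m)%:R)%R.
Arguments Prob R n m E : clear implicits.

(* Main.v *)
Require Import Defs.
From HB Require Import structures.
From mathcomp Require Import all_boot all_order all_algebra.
From mathcomp Require Import reals.
From mathcomp Require Import sequences exp.
From mathcomp Require Import zify ring lra.
Import Order.TTheory GRing.Theory Num.Theory.

Lemma vote1 (n k : nat) (s : 'I_n) : (2 <= k)%N -> (k <= n)%N ->
  ~~ (0 < s < k)%N -> vote [:: 1%N; k] s = 1%N.
Proof.
move=> k2 kn Hs; rewrite /vote /pref.
have [s0|spos] := posnP s.
  rewrite s0 /=; move: s s0 kn {Hs}; case: n => [|n'] [s' Hs'] //= _ _.
have ks : (k <= s)%N by move: Hs; rewrite spos /= -leqNgt.
rewrite filter_cat.
have -> : [seq c <- iota s.+1 (n.+1 - s.+1) | c \in [:: 1%N; k]] = [::].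
  rewrite (eq_in_filter (a2 := pred0)) ?filter_pred0 // => c.
  rewrite mem_iota => /andP [H1 _] /=; rewrite !inE.
  apply/negP => /orP [/eqP E|/eqP E]; subst; lia.
case: (s : nat) spos => [|s'] //= _.
Qed.

Local Open Scope ring_scope.
Lemma sumg (R : realType) (n k : nat) (l : R) : (1 <= k <= n)%N ->
  \sum_(s < n) (if (0 < s < k)%N then l else l^-1) = l *+ k.-1 + l^-1 *+ (n.+1 - k).
Proof.
move=> /andP [k1 kn].
rewrite -(big_mkord xpredT (fun s : nat => if (0 < s < k)%N then l else l^-1)).
rewrite (big_cat_nat (n:=1)) //= ?(leq_trans k1 kn) //.
rewrite [X in _ + X](big_cat_nat (n:=k)) //= big_nat1 /=.
rewrite (eq_big_nat _ _ (F2 := fun=> l)); last first.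
  by move=> i /andP [H1 H2]; rewrite H2 andbT (leq_trans _ H1).
rewrite [X in _ + (_ + X)](eq_big_nat _ _ (F2 := fun=> l^-1)); last first.
  by move=> i /andP [H1 H2]; case: ifP => // /andP [_ H3]; move: H3; rewrite ltnNge H1.
rewrite !sumr_const_nat subn1 addrCA -mulrS; congr (_ + _ *+ _); lia.
Qed.

Lemma prodg (R : realType) (I : finType) (p : pred I) (l : R) : 1 <= l ->
  (#|[predC p]| <= #|p|)%N -> 1 <= \prod_i (if p i then l else l^-1).
Proof.
move=> l1 Hc.
have l0 : l != 0 by apply/negP => /eqP l0; rewrite l0 ler10 in l1.
rewrite (bigID p) /=.
rewrite (eq_bigr (fun=> l)); last by move=> i ->.
rewrite [X in _ * X](eq_bigr (fun=> l^-1)); last by move=> i /negbTE ->.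
rewrite !prodr_const -(subnK Hc) exprD -mulrA exprVn mulfV ?expf_neq0 // mulr1.
exact: exprn_ege1.
Qed.

Theorem mainTheorem5 (R : realType) (n m k : nat) :
  (6 <= n)%N -> ~~ odd n -> (2 <= k)%N -> (k <= n./2)%N ->
  Prob R n m (fun w : {ffun 'I_m -> 'I_n} => (Xi [:: 1%N; k] w 1 <= Xi [:: 1%N; k] w k)%N)
  <= expR (m%:R * ln (1 - n%:R^-1 *
        (Num.sqrt (n.+1 - k)%N%:R - Num.sqrt (k.-1)%:R) ^+ 2)).
Proof.
move=> n6 nodd k2 kn2.
have Hn := odd_double_half n; rewrite (negbTE nodd) add0n in Hn.
have H2k : (k.*2 <= n)%N by rewrite -Hn leq_double.
have kn : (k <= n)%N by lia.
set a := k.-1; set b := (n.+1 - k)%N.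
have ab : (a + b = n)%N by rewrite /a /b; lia.
have a0 : (0 : R) < a%:R by rewrite ltr0n /a; lia.
have b0 : (0 : R) < b%:R by rewrite ltr0n /b; lia.
set sa := Num.sqrt (a%:R : R); set sb := Num.sqrt (b%:R : R).
have sa0 : 0 < sa by rewrite sqrtr_gt0.
have sb0 : 0 < sb by rewrite sqrtr_gt0.
have sa2 : sa ^+ 2 = a%:R by rewrite sqr_sqrtr // ltW.
have sb2 : sb ^+ 2 = b%:R by rewrite sqr_sqrtr // ltW.
have sab : sa <= sb by rewrite ler_sqrt // ler_nat /a /b; lia.
set l := sb / sa.
have l1 : 1 <= l by rewrite /l ler_pdivlMr // mul1r.
have n0 : (0 : R) < n%:R by rewrite ltr0n; lia.
set x := 2 * sa * sb / n%:R.
have x0 : 0 < x by rewrite /x !mulr_gt0 ?invr_gt0.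
have -> : 1 - n%:R^-1 * (sb - sa) ^+ 2 = x.
  rewrite /x -ab natrD -sa2 -sb2; field.
  by rewrite sa2 sb2 -natrD ab gt_eqF.
rewrite mulr_natl -lnXn // lnK ?posrE ?exprn_gt0 //.
rewrite /Prob.
set E := [set w | _].
have key : #|E|%:R <= (2 * sa * sb) ^+ m :> R.
  pose g (s : 'I_n) := if (0 < s < k)%N then l else l^-1.
  apply: (@le_trans _ _ (\sum_(w : {ffun 'I_m -> 'I_n}) \prod_j g (w j))).
    have -> : #|E|%:R = \sum_(w in E) (1 : R) by rewrite sumr_const. rewrite big_mkcond /=.
    apply: ler_sum => w _; case: ifP => HE; last first.
      by apply: prodr_ge0 => j _; rewrite /g; case: ifP => _; rewrite ?invr_ge0 (le_trans ler01 l1).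
    apply: (@prodg R _ [pred j | (0 < w j < k)%N]) => //.
    move: HE; rewrite inE /Xi => HE.
    apply: leq_trans (leq_trans HE _).
      apply: subset_leq_card; apply/subsetP => j; rewrite !inE => Hj.
      by rewrite vote1.
    apply: subset_leq_card; apply/subsetP => j; rewrite !inE => /eqP Hj.
    apply: contraT => Hn'; have := @vote1 _ _ _ k2 kn Hn'; rewrite Hj => E1; lia.
  rewrite -(bigA_distr_bigA (fun (j : 'I_m) (s : 'I_n) => g s)) /=.
  suff -> : \sum_(s < n) g s = 2 * sa * sb by rewrite prodr_const card_ord.
  rewrite /g sumg; last by apply/andP; split; lia.
  change (l *+ a + l^-1 *+ b = 2 * sa * sb).
  rewrite /l -mulr_natr -[in X in _ + X]mulr_natr -sa2 -sb2.
  field; by rewrite !gt_eqF.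
rewrite /x exprMn exprVn natrX.
by rewrite ler_pM2r // invr_gt0 exprn_gt0.
Qed.
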